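(* Let $(k^\times)^{\mathbb{Z}}$ be the group of all sequences $\alpha=(\alpha_n)_{n\in\mathbb{Z}}$ of nonzero elements of $k$ under componentwise multiplication. For $\alpha\in(k^\times)^{\mathbb{Z}}$ let $\phi_\alpha:H\to H$ be the linear map with $$\phi_\alpha(x^n)=x^n,\qquad \phi_\alpha(x^ny^m)=\Big(\prod_{i=0}^{m-1}\alpha_{n+i}\Big)x^ny^m\quad(n\in\mathbb{Z},\ m\geq 1).$$ Then the map $(k^\times)^{\mathbb{Z}}\to \mathrm{Aut}_0^{gr}(H)$, $\alpha\mapsto\phi_\alpha$, is a group isomorphism.
   Context: Let $k$ be a field and $0\neq q\in k$ not a root of unity. Let $H=k_q[x,x^{-1},y]$ be the $k$-algebra generated by $x,x^{-1},y$ subject to $xx^{-1}=x^{-1}x=1$, $yx=qxy$. It is a Hopf algebra with $\Delta(x)=x\otimes x$, $\Delta(x^{-1})=x^{-1}\otimes x^{-1}$, $\Delta(y)=y\otimes x+1\otimes y$, $\varepsilon(x)=\varepsilon(x^{-1})=1$, $\varepsilon(y)=0$, $S(x)=x^{-1}$, $S(y)=-yx^{-1}$. The elements $x^ny^m$ ($n\in\mathbb{Z}$, $m\in\mathbb{N}$) form a $k$-basis, and $\Delta(x^ny^m)=\sum_{i=0}^m\binom{m}{i}_q x^ny^i\otimes x^{n+i}y^{m-i}$, where $(n)_q=1+q+\cdots+q^{n-1}$, $(n)!_q=(n)_q(n-1)_q\cdots(1)_q$, $(0)!_q=1$, and $\binom{m}{i}_q=\frac{(m)!_q}{(i)!_q(m-i)!_q}$.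 Let $H_0=\mathrm{span}\{x^n:n\in\mathbb{Z}\}$ and $H(m)=H_0y^m$; then $H=\bigoplus_{m\geq0}H(m)$ is a graded coalgebra. $\mathrm{Aut}_c(H)$ is the group (under composition) of all coalgebra automorphisms of $H$; $\mathrm{Aut}_0(H)=\{\phi\in\mathrm{Aut}_c(H):\phi(1)=1\}$; $\mathrm{Aut}_c^{gr}(H)=\{\phi\in\mathrm{Aut}_c(H):\phi(H(m))\subseteq H(m)\ \forall m\geq0\}$; $\mathrm{Aut}_0^{gr}(H)=\mathrm{Aut}_c^{gr}(H)\cap\mathrm{Aut}_0(H)$. *)

(* Defs.v *)
From HB Require Import structures.
From mathcomp Require Import all_boot all_order all_algebra.
From mathcomp Require Import finmap.
From mathcomp.multinomials Require Import monalg.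
Set Implicit Arguments. Unset Strict Implicit. Unset Printing Implicit Defensive.
Import Order.TTheory GRing.Theory Num.Theory.
Local Open Scope ring_scope.

(* Basis index: (n, m) stands for the basis element x^n y^m of H = k_q[x,x^-1,y]. *)
Definition B := (int * nat)%type.

(* The underlying vector space of H: finitely supported k-combinations of x^n y^m. *)
Definition H (k : fieldType) := {malg k[B]}.
(* H (x) H, with basis (x^n y^m) (x) (x^n' y^m'). *)
Definition HH (k : fieldType) := {malg k[(B * B)%type]}.

Definition qnum (k : fieldType) (q : k) (n : nat) : k := \sum_(i < n) q ^+ i.
Definition qfact (k : fieldType) (q : k) (n : nat) : k := \prod_(j < n) qnum q j.+1.
Definition qbinom (k : fieldType) (q : k) (m i : nat) : k :=
  qfact q m / (qfact q i * qfact q (m - i)).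

(* Comultiplication on basis elements:
   Delta(x^n y^m) = sum_{i=0}^m binom(m,i)_q x^n y^i (x) x^{n+i} y^{m-i} *)
Definition Delta_basis (k : fieldType) (q : k) (b : B) : HH k :=
  \sum_(i < b.2.+1) qbinom q b.2 i *: << (((b.1, (i : nat)) : B), ((b.1 + (i : nat)%:Z, (b.2 - i)%N) : B)) >>.

Definition Delta (k : fieldType) (q : k) (h : H k) : HH k :=
  \sum_(b <- msupp h) h@_b *: Delta_basis q b.

Definition eps (k : fieldType) (h : H k) : k :=
  \sum_(b <- msupp h | b.2 == 0%N) h@_b.

Definition oneH (k : fieldType) : H k := << ((0 : int), 0%N) >>.

Definition tens (k : fieldType) (u v : H k) : HH k :=
  \sum_(a <- msupp u) \sum_(b <- msupp v) (u@_a * v@_b) *: << (a, b) >>.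

Definition tensmap (k : fieldType) (f g : H k -> H k) (T : HH k) : HH k :=
  \sum_(c <- msupp T) T@_c *: tens (f << c.1 >>) (g << c.2 >>).

Definition is_coalg_aut (k : fieldType) (q : k) (f : H k -> H k) : Prop :=
  [/\ linear f, bijective f,
      (forall h, Delta q (f h) = tensmap f f (Delta q h)) &
      (forall h, eps (f h) = eps h)].

Definition in_Hm (k : fieldType) (m : nat) (h : H k) : Prop :=
  forall b, b \in msupp h -> b.2 = m.

Definition Aut0gr (k : fieldType) (q : k) (f : H k -> H k) : Prop :=
  [/\ is_coalg_aut q f, f (oneH k) = oneH k &
      (forall m h, in_Hm m h -> in_Hm m (f h))].

Definition phi (k : fieldType) (alpha : int -> k) (h : H k) : H k :=
  \sum_(b <- msupp h) (h@_b * \prod_(i < b.2) alpha (b.1 + (i : nat)%:Z)) *: << b >>.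

(* Main.v *)
Require Import Defs.
From HB Require Import structures.
From mathcomp Require Import all_boot all_order all_algebra.
From mathcomp Require Import finmap.
From mathcomp.multinomials Require Import monalg.
From mathcomp Require Import zify ring.
Import GRing.Theory.
Local Open Scope ring_scope.

Lemma big_single (T : eqType) (V : zmodType) (s : seq T) (F : T -> V) z0 :
  uniq s -> (forall z, z != z0 -> F z = 0) -> (z0 \notin s -> F z0 = 0) ->
  \sum_(z <- s) F z = F z0.
Proof.
move=> us Hz H0; case: (boolP (z0 \in s)) => Hin.
  by rewrite (bigD1_seq z0) //= big1 ?addr0 // => z; exact: Hz.
rewrite big1_seq ?H0 // => z /andP[_ zs]; apply: Hz.
by apply: contraNneq Hin => <-.
Qed.

Fact U_key : unit. Proof. by []. Qed.

Section Gen.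
Variable k : fieldType.
Variable q : k.

Lemma mcoeff_sum (K : choiceType) (I : Type) (r : seq I) (F : I -> {malg k[K]}) x :
  (\sum_(i <- r) F i)@_x = \sum_(i <- r) (F i)@_x.
Proof. by rewrite raddf_sum. Qed.

Lemma mcoeffU1 (K : choiceType) (x y : K) : (<< x >> : {malg k[K]})@_y = (x == y)%:R.
Proof. by rewrite mcoeffU. Qed.

Definition U : B -> H k := locked_with U_key (fun b : B => << b >>).

Lemma mcoeffUb (b c : B) : (U b)@_c = (b == c)%:R.
Proof. by rewrite /U locked_withE mcoeffU. Qed.

Lemma Delta_basisE (b : B) a i c j :
  (Delta_basis q b)@_((a,i),(c,j)) =
  if b == (a,(i+j)%N) then (c == a + i%:Z)%:R * qbinom q (i+j) i else 0.
Proof.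
case: b => n m; rewrite /Delta_basis mcoeff_sum /=.
under eq_bigr do rewrite mcoeffZ mcoeffU1.
case: eqP => [[-> ->]| ne].
  have Hi : (i < (i+j).+1)%N by lia.
  rewrite (bigD1 (Ordinal Hi)) //= big1 ?addr0.
    by rewrite addKn !xpair_eqE !eqxx /= andbT mulrC eq_sym.
  move=> l ne; rewrite !xpair_eqE.
  have -> : ((l : nat) == i) = false.
    by apply/negbTE; apply: contra_neq ne => E; apply: val_inj.
  by rewrite /= andbF mulr0.
rewrite big1 // => l _.
case: eqP => [E|]; last by rewrite mulr0.
exfalso; apply: ne; case: E => -> li _ mj; congr pair.
have := ltn_ord l; lia.
Qed.

Lemma DeltaE (h : H k) a i c j :
  (Delta q h)@_((a,i),(c,j)) = (c == a + i%:Z)%:R * h@_(a,(i+j)%N) * qbinom q (i+j) i.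
Proof.
rewrite /Delta mcoeff_sum (@big_single _ _ _ _ (a,(i+j)%N)) ?fset_uniq //.
- by rewrite mcoeffZ Delta_basisE eqxx mulrCA mulrA.
- by move=> z /negbTE nz; rewrite mcoeffZ Delta_basisE nz mulr0.
- by move=> /mcoeff_outdom ->; rewrite mcoeffZ !mul0r ?mulr0.
Qed.

Lemma tensE (u v : H k) x y : (tens u v)@_(x,y) = u@_x * v@_y.
Proof.
rewrite /tens mcoeff_sum (@big_single _ _ _ _ x) ?fset_uniq //.
- rewrite mcoeff_sum (@big_single _ _ _ _ y) ?fset_uniq //.
  + by rewrite mcoeffZ mcoeffU1 eqxx mulr1.
  + by move=> z nz; rewrite mcoeffZ mcoeffU1 xpair_eqE eqxx /= (negbTE nz) mulr0.
  + by move=> /mcoeff_outdom ->; rewrite mcoeffZ mulr0 mul0r.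
- move=> z nz; rewrite mcoeff_sum big1 // => w _.
  by rewrite mcoeffZ mcoeffU1 xpair_eqE (negbTE nz) mulr0.
- move=> /mcoeff_outdom ux; rewrite mcoeff_sum big1 // => w _.
  by rewrite mcoeffZ ux !mul0r.
Qed.

Lemma tensmapE (f g : H k -> H k) (T : HH k) x y :
  (tensmap f g T)@_(x,y) = \sum_(z <- msupp T) T@_z * ((f (U z.1))@_x * (g (U z.2))@_y).
Proof. by rewrite /tensmap mcoeff_sum; apply: eq_bigr => z _; rewrite mcoeffZ tensE /U !locked_withE. Qed.

Definition P (alpha : int -> k) (c : B) := \prod_(i < c.2) alpha (c.1 + (i : nat)%:Z).

Lemma phiE alpha (h : H k) c : (phi alpha h)@_c = h@_c * P alpha c.
Proof.
rewrite /phi mcoeff_sum (@big_single _ _ _ _ c) ?fset_uniq //.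
- by rewrite mcoeffZ mcoeffU1 eqxx mulr1.
- by move=> z nz; rewrite mcoeffZ mcoeffU1 (negbTE nz) mulr0.
- by move=> /mcoeff_outdom ->; rewrite mcoeffZ !mul0r.
Qed.

End Gen.
Arguments P {k} alpha c.
Arguments U {k}.

Definition phiL := locked_with U_key (@phi).
Definition DeltaL := locked_with U_key (@Delta).
Definition tensmapL := locked_with U_key (@tensmap).
Arguments phiL {k}.
Arguments DeltaL {k}.
Arguments tensmapL {k}.
Lemma phiLE : @phi = @phiL. Proof. by rewrite /phiL locked_withE. Qed.
Lemma DeltaLE : @Delta = @DeltaL. Proof. by rewrite /DeltaL locked_withE. Qed.
Lemma tensmapLE : @tensmap = @tensmapL. Proof. by rewrite /tensmapL locked_withE. Qed.

Lemma phiLc (k : fieldType) (alpha : int -> k) (h : H k) c :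
  (phiL alpha h)@_c = h@_c * P alpha c.
Proof. by rewrite -phiLE phiE. Qed.
Lemma DeltaLc (k : fieldType) (q : k) (h : H k) a i c j :
  (DeltaL q h)@_((a,i),(c,j)) = (c == a + i%:Z)%:R * h@_(a,(i+j)%N) * qbinom q (i+j) i.
Proof. by rewrite -DeltaLE DeltaE. Qed.
Lemma tensmapLc (k : fieldType) (f g : H k -> H k) (T : HH k) x y :
  (tensmapL f g T)@_(x,y) = \sum_(z <- msupp T) T@_z * ((f (U z.1))@_x * (g (U z.2))@_y).
Proof. by rewrite -tensmapLE tensmapE. Qed.


Section Lin.
Variable k : fieldType.

Lemma lin0 (f : H k -> H k) : linear f -> f 0 = 0.
Proof. by move=> Hf; have := Hf (-1) 0 0; rewrite scaler0 addr0 scaleN1r addNr. Qed.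

Lemma linZ (f : H k -> H k) a u : linear f -> f (a *: u) = a *: f u.
Proof. by move=> Hf; have := Hf a u 0; rewrite [X in f X]addr0 => ->; rewrite (lin0 _ Hf) addr0. Qed.

Lemma linD (f : H k -> H k) u v : linear f -> f (u + v) = f u + f v.
Proof. by move=> Hf; have := Hf 1 u v; rewrite !scale1r. Qed.

Lemma lin_sum (f : H k -> H k) (I : Type) (r : seq I) (F : I -> H k) :
  linear f -> f (\sum_(i <- r) F i) = \sum_(i <- r) f (F i).
Proof.
move=> Hf; elim: r => [|x r IH]; first by rewrite !big_nil lin0.
by rewrite !big_cons linD // IH.
Qed.

Lemma malgU_scale (b : B) (c : k) : (<< c *g b >> : H k) = c *: U b.
Proof. by apply/malgP => z; rewrite [RHS]mcoeffZ mcoeffUb [LHS]mcoeffU; case: (b == z); rewrite /= ?mulr1 ?mulr0. Qed.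

Lemma lin_expand (f : H k -> H k) (h : H k) :
  linear f -> f h = \sum_(b <- msupp h) h@_b *: f (U b).
Proof.
move=> Hf; rewrite {1}(monalgE h) lin_sum //; apply: eq_bigr => b _.
by rewrite malgU_scale linZ.
Qed.

Lemma qnum_neq0 (q : k) (hq : forall n : nat, (0 < n)%N -> q ^+ n != 1) n :
  qnum q n.+1 != 0.
Proof.
apply/negP => /eqP H0; have := hq n.+1 isT.
by rewrite -subr_eq0 subrX1 -/(qnum q n.+1) H0 mulr0 eqxx.
Qed.

Lemma qbinom_neq0 (q : k) (hq : forall n : nat, (0 < n)%N -> q ^+ n != 1) m i :
  qbinom q m i != 0.
Proof.
have qf : forall n, qfact q n != 0.
  by move=> n; apply/prodf_neq0 => j _; apply: qnum_neq0.
by rewrite /qbinom mulf_neq0 // invr_neq0 // mulf_neq0.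
Qed.

Lemma P_neq0 (alpha : int -> k) c : (forall n, alpha n != 0) -> P alpha c != 0.
Proof. by move=> ha; apply/prodf_neq0 => i _. Qed.

Lemma Psplit (alpha : int -> k) a i j :
  P alpha (a, (i + j)%N) = P alpha (a, i) * P alpha (a + i%:Z, j).
Proof.
rewrite /P /= big_split_ord /=; congr (_ * _); apply: eq_bigr => l _.
by rewrite /= PoszD addrA.
Qed.

End Lin.
Arguments lin0 {k f}.
Arguments linZ {k f}.
Arguments linD {k f}.
Arguments lin_sum {k f I}.
Arguments lin_expand {k f}.
Arguments qbinom_neq0 {k q}.


Lemma oneHU (k : fieldType) : oneH k = U ((0, 0%N) : B).
Proof. by apply/malgP => c; rewrite mcoeffUb /oneH mcoeffU. Qed.

Lemma phiL_lin (k : fieldType) (alpha : int -> k) : linear (phiL alpha).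
Proof.
move=> a u v; apply/malgP => c.
rewrite [LHS]phiLc [RHS]mcoeffD [in RHS]mcoeffZ !phiLc mcoeffD mcoeffZ.
by rewrite mulrDl mulrA.
Qed.

Lemma phi_aut (k : fieldType) (q : k) (alpha : int -> k) :
  (forall n, alpha n != 0) -> Aut0gr q (phi alpha).
Proof.
move=> ha; rewrite /Aut0gr /is_coalg_aut phiLE DeltaLE tensmapLE; split; first split.
- exact: phiL_lin.
- exists (phiL (fun n => (alpha n)^-1)) => h; apply/malgP => c;
    rewrite !phiLc -mulrA /P -big_split /= big1 ?mulr1 // => i _;
    by rewrite ?mulfV ?mulVf.
- move=> h; apply/malgP => [[[a i] [c j]]].
  rewrite DeltaLc tensmapLc (@big_single _ _ _ _ ((a,i),(c,j))) ?fset_uniq //.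
  + rewrite DeltaLc !phiLc !mcoeffUb /= !eqxx !mul1r.
    case: eqP => [->|]; last by rewrite !mul0r.
    rewrite Psplit; ring.
  + move=> [z1 z2]; rewrite xpair_eqE negb_and => /orP[] /negbTE ne;
      by rewrite /= !phiLc !mcoeffUb ne !(mul0r, mulr0).
  + by move/mcoeff_outdom ->; rewrite mul0r.
- move=> h.
  have Hp : perm_eq (msupp (phiL alpha h)) (msupp h).
    apply: uniq_perm; rewrite ?fset_uniq // => b.
    by rewrite -!mcoeff_neq0 phiLc mulf_eq0 negb_or P_neq0 // andbT.
  rewrite /eps (perm_big _ Hp) /=; apply: eq_bigr => [[n m]] /= /eqP m0.
  by subst m; rewrite phiLc /P /= big_ord0 mulr1.
- rewrite oneHU; apply/malgP => c; rewrite phiLc mcoeffUb; case: eqP => [<-|];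
    by [rewrite /P /= big_ord0 mulr1 | rewrite mul0r].
- move=> m h Hh b; rewrite -mcoeff_neq0 phiLc mulf_eq0 negb_or => /andP[hb _].
  by apply: Hh; rewrite -mcoeff_neq0.
Qed.

Lemma phi_mul (k : fieldType) (alpha beta : int -> k) h :
  phi (fun n => alpha n * beta n) h = phi alpha (phi beta h).
Proof. by rewrite phiLE; apply/malgP => c; rewrite !phiLc /P big_split /= mulrA mulrAC. Qed.

Lemma phi_inj (k : fieldType) (alpha beta : int -> k) :
  (forall h, phi alpha h = phi beta h) -> forall n, alpha n = beta n.
Proof.
rewrite phiLE => H n; have := congr1 (mcoeff ((n, 1%N) : B)) (H (U ((n, 1%N) : B))).
by rewrite !phiLc mcoeffUb eqxx !mul1r /P /= !big_ord1 /= addr0.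
Qed.

Section Surj.
Variables (k : fieldType) (q : k).
Hypothesis hq : forall n : nat, (0 < n)%N -> q ^+ n != 1.
Variable f : H k -> H k.
Hypothesis Hf : Aut0gr q f.

Local Notation G b := (f (U (b : B))).

Let Hlin : linear f. Proof. by case: Hf => [[]]. Qed.
Let Hbij : bijective f. Proof. by case: Hf => [[]]. Qed.
Let HD : forall h, DeltaL q (f h) = tensmapL f f (DeltaL q h).
Proof. by rewrite -DeltaLE -tensmapLE; case: Hf => [[]]. Qed.
Let H1 : f (oneH k) = oneH k. Proof. by case: Hf. Qed.
Let Hgr : forall m h, in_Hm m h -> in_Hm m (f h). Proof. by case: Hf. Qed.

Lemma gr n m (b : B) : b.2 != m -> (G (n,m))@_b = 0.
Proof.
move=> bm; apply: mcoeff_outdom; apply/negP => Hb.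
have Hm : @in_Hm k m (U ((n,m) : B)).
  move=> b' Hb'; have : (U ((n,m) : B) : H k)@_b' != 0 by rewrite mcoeff_neq0.
  by rewrite mcoeffUb; case: (eqVneq ((n,m) : B) b') => [<- //|_]; rewrite /= eqxx.
by have := Hgr _ _ Hm b Hb => E; rewrite E eqxx in bm.
Qed.

Lemma Gnz (b : B) : G b != 0.
Proof.
apply/eqP => Gb0; have : f (U b) = f 0 by rewrite Gb0 (lin0 Hlin).
move/(bij_inj Hbij)/eqP => /eqP/(congr1 (mcoeff b)).
by rewrite mcoeffUb eqxx mcoeff0 => /eqP; rewrite oner_eq0.
Qed.

Lemma KE n i j a c :
  (c == a + i%:Z)%:R * (G (n,(i+j)%N))@_(a,(i+j)%N) =
  (G (n,i))@_(a,i) * (G (n + i%:Z, j))@_(c,j).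
Proof.
have := congr1 (mcoeff ((a,i),(c,j))) (HD (U ((n,(i+j)%N) : B))).
rewrite DeltaLc tensmapLc (@big_single _ _ _ _ (((n,i),(n+i%:Z,j)) : B * B)) ?fset_uniq //.
- rewrite DeltaLc mcoeffUb /= !eqxx => E.
  have qnz := @qbinom_neq0 k q hq (i+j) i.
  apply: (mulIf qnz); rewrite E !mul1r mulrC; by [].
- move=> [[n' i'] [c' j']] ne; rewrite DeltaLc mcoeffUb /=.
  case: (eqVneq i' i) => [ei|ni]; last first.
    by rewrite (@gr n' i' (a,i)) ?mul0r ?mulr0 //= eq_sym.
  case: (eqVneq j' j) => [ej|nj]; last first.
    by rewrite (@gr c' j' (c,j)) ?mul0r ?mulr0 //= eq_sym.
  move: ne; rewrite ei ej => ne.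
  case: (eqVneq n' n) => [en|nn]; last first.
    by rewrite xpair_eqE [n == n']eq_sym (negbTE nn) /= mulr0 !mul0r.
  move: ne; rewrite en => ne.
  case: eqP => [ec|nc]; last by rewrite !mul0r.
  by move: ne; rewrite ec => /eqP nn; exfalso; apply: nn.
- by move/mcoeff_outdom ->; rewrite mul0r.
Qed.

Lemma G0_ex n : exists s, G (n,0%N) = U ((s,0%N) : B).
Proof.
have : msupp (G (n,0%N)) != fset0.
  apply/negP => /eqP E.
  have G0z : G (n,0%N) = 0.
    by apply/malgP => b; rewrite mcoeff0; apply: mcoeff_outdom; rewrite E inE.
  by move: (Gnz (n,0%N)); rewrite G0z eqxx.
case/fset0Pn => [[s m]] Hb.
have m0 : m = 0%N.
  by apply/eqP; apply: contraTT Hb => m0'; rewrite -mcoeff_eq0 gr.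
subst m.
have E0 : forall a c, (c == a)%:R * (G (n,0%N))@_(a,0%N) =
                      (G (n,0%N))@_(a,0%N) * (G (n,0%N))@_(c,0%N).
  by move=> a c; have := KE n 0 0 a c; rewrite !addn0 !addr0.
have es : (G (n,0%N))@_(s,0%N) != 0 by rewrite mcoeff_neq0.
have es1 : (G (n,0%N))@_(s,0%N) = 1.
  have := E0 s s; rewrite eqxx mul1r => E; apply: (mulfI es).
  by rewrite mulr1 -E.
exists s; apply/malgP => [[a i]]; rewrite mcoeffUb.
case: (eqVneq i 0%N) => [->|ni]; last first.
  by rewrite gr // xpair_eqE andbC eq_sym (negbTE ni).
case: (eqVneq a s) => [->|na]; first by rewrite eqxx es1.
have := E0 a s; rewrite eq_sym (negbTE na) mul0r es1 mulr1 => <-.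
by rewrite xpair_eqE eq_sym (negbTE na).
Qed.

Lemma L1 n s t : G (n,0%N) = U ((s,0%N) : B) -> G (n + 1%:Z, 0%N) = U ((t,0%N) : B) ->
  t = s + 1%:Z.
Proof.
move=> Hs Ht.
have Ea : forall a c, (c == a)%:R * (G (n,1%N))@_(a,1%N) =
    ((s,0%N) == (a,0%N) :> B)%:R * (G (n,1%N))@_(c,1%N).
  by move=> a c; have := KE n 0 1 a c; rewrite add0n !addr0 Hs mcoeffUb.
have Eb : forall a c, (c == a + 1%:Z)%:R * (G (n,1%N))@_(a,1%N) =
    (G (n,1%N))@_(a,1%N) * ((t,0%N) == (c,0%N) :> B)%:R.
  by move=> a c; have := KE n 1 0 a c; rewrite addn0 Ht mcoeffUb.
have ds : (G (n,1%N))@_(s,1%N) != 0.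
  apply: (contra _ (Gnz (n,1%N))) => /eqP d0; apply/eqP/malgP => [[a i]].
  rewrite mcoeff0; case: (eqVneq i 1%N) => [->|ni]; last by rewrite gr.
  by have := Ea s a; rewrite d0 mulr0 eqxx mul1r => E; rewrite -E.
have := Eb s t; rewrite eqxx mulr1.
by case: eqP => [//|_]; rewrite mul0r => /esym/eqP; rewrite (negbTE ds).
Qed.

Lemma G0 n : G (n,0%N) = U ((n,0%N) : B).
Proof.
elim/int_rec: n => [|n IH|n IH].
- by rewrite -oneHU; exact: H1.
- have [t Ht] := G0_ex n.+1.
  have e : (n.+1 : int) = n%:Z + 1%:Z by rewrite -PoszD addn1.
  move: Ht; rewrite e => Ht; rewrite Ht.
  by rewrite (L1 _ _ _ IH Ht).
- have [s Hs] := G0_ex (- (n.+1%:Z)).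
  have e : - (n.+1%:Z) + 1%:Z = - (n%:Z) by lia.
  have := L1 _ _ _ Hs; rewrite e => /(_ _ IH) st.
  by rewrite Hs; have -> : s = - (n.+1%:Z) by lia.
Qed.

Lemma Gshape n m : G (n,m) = (G (n,m))@_(n,m) *: U ((n,m) : B).
Proof.
have Ec : forall c, (G (n,m))@_(c,m) = (c == n)%:R * (G (n,m))@_(n,m).
  by move=> c; have := KE n 0 m n c; rewrite add0n !addr0 G0 mcoeffUb eqxx mul1r => <-.
apply/malgP => [[a i]]; rewrite mcoeffZ mcoeffUb.
case: (eqVneq i m) => [->|ni]; last first.
  by rewrite gr // xpair_eqE andbC eq_sym (negbTE ni) mulr0.
by rewrite Ec xpair_eqE eqxx andbT eq_sym mulrC.
Qed.

Let alpha n := (G (n,1%N))@_(n,1%N).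

Lemma Gcoef n m : (G (n,m))@_(n,m) = P alpha (n,m).
Proof.
elim: m n => [|m IH] n.
  by rewrite G0 mcoeffUb eqxx /P big_ord0.
have := KE n 1 m n (n + 1%:Z); rewrite add1n eqxx mul1r IH => ->.
rewrite /P /= big_ord_recl /= addr0; congr (_ * _); apply: eq_bigr => i _.
by rewrite /bump leq0n add1n; congr alpha; lia.
Qed.

Lemma alpha_nz n : alpha n != 0.
Proof.
apply: (contra _ (Gnz (n,1%N))) => /eqP a0.
by rewrite Gshape; rewrite /alpha in a0; rewrite a0 scale0r.
Qed.

Lemma surj_main : exists2 alpha : int -> k, (forall n, alpha n != 0) & forall h, f h = phi alpha h.
Proof.
exists alpha; first exact: alpha_nz.
have Hl := phiL_lin k alpha.
move=> h; rewrite phiLE (lin_expand h Hlin) [RHS](lin_expand h Hl).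
apply: eq_bigr => [[n m]] _; congr (_ *: _).
rewrite Gshape Gcoef; apply/malgP => c.
by rewrite phiLc !mcoeffZ mcoeffUb; case: eqP => [<-|]; rewrite ?mulr1 ?mul1r ?mulr0 ?mul0r.
Qed.

End Surj.

Theorem theorem2p12 (k : fieldType) (q : k) (hq0 : q != 0)
    (hq : forall n : nat, (0 < n)%N -> q ^+ n != 1) :
  (* well-defined: phi_alpha lies in Aut_0^gr(H) *)
  (forall alpha : int -> k, (forall n, alpha n != 0) -> Aut0gr q (phi alpha)) /\
  (* group homomorphism (componentwise product |-> composition) *)
  (forall alpha beta : int -> k, (forall n, alpha n != 0) -> (forall n, beta n != 0) ->
     forall h, phi (fun n => alpha n * beta n) h = phi alpha (phi beta h)) /\
  (* injective *)
  (forall alpha beta : int -> k, (forall n, alpha n != 0) -> (forall n, beta n != 0) ->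
     (forall h, phi alpha h = phi beta h) -> forall n, alpha n = beta n) /\
  (* surjective onto Aut_0^gr(H) *)
  (forall f : H k -> H k, Aut0gr q f ->
     exists2 alpha : int -> k, (forall n, alpha n != 0) & forall h, f h = phi alpha h).
Proof.
split; first by move=> alpha ha; exact: phi_aut.
split; first by move=> alpha beta _ _ h; exact: phi_mul.
split; first by move=> alpha beta _ _; exact: phi_inj.
by move=> f Hf; exact: (surj_main _ _ hq f Hf).
Qed.
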